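(* Let $k\ge 4$ be even, $1\le s\le k-1$, and let $G$ be a $k$-uniform $s$-cycle which is not regular. Then $G$ is odd-bipartite.
   Context: A $k$-uniform $s$-cycle with $m$ edges has vertex set $\mathbb{Z}_n$, $n=m(k-s)$ (vertex $n+i$ identified with $i$), and edges $e_j=\{j(k-s)+1,\ldots,j(k-s)+k\}$, $j=0,\ldots,m-1$; it is assumed that $n\ge 2k-s$. A hypergraph is regular if all vertex degrees (numbers of edges containing the vertex) are equal. A $k$-uniform hypergraph with $k$ even and vertex set $V$ is odd-bipartite if either it has no edges or there is a partition $V=V_1\cup V_2$ with $V_1,V_2\ne\emptyset$ such that every edge intersects $V_1$ in an odd number of vertices. *)

(* Defs.v *)
From mathcomp Require Import all_boot.
Set Implicit Arguments. Unset Strict Implicit. Unset Printing Implicit Defensive.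

Definition hdeg (V : finType) (E : {set {set V}}) (v : V) : nat :=
  #|[set e in E | v \in e]|.

Definition hregular (V : finType) (E : {set {set V}}) : Prop :=
  forall u v : V, hdeg E u = hdeg E v.

Definition kuniform (V : finType) (k : nat) (E : {set {set V}}) : Prop :=
  forall e, e \in E -> #|e| = k.

Definition odd_bipartite (V : finType) (E : {set {set V}}) : Prop :=
  E = set0 \/
  exists V1 : {set V}, [/\ V1 != set0, ~: V1 != set0 &
                           forall e, e \in E -> odd #|e :&: V1|].

(* vertex set Z_n, n = m(k-s); vertex x in Z is identified with x mod n *)
Definition scycle_n (k s m : nat) : nat := m * (k - s).

Definition scycle_edge (k s m j : nat) : {set 'I_(scycle_n k s m)} :=
  [set v : 'I_(scycle_n k s m) |
     [exists t : 'I_k, val v == (j * (k - s) + 1 + t) %% scycle_n k s m]].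

Definition scycle (k s m : nat) : {set {set 'I_(scycle_n k s m)}} :=
  [set scycle_edge k s m j | j : 'I_m].

(* Main.v *)
Require Import Defs.
From mathcomp Require Import all_boot zify.
Lemma jd_le j m d : j < m -> 0 < d -> j * d + 1 <= m * d.
Proof. move=> jm d0. have : j.+1 * d <= m * d by rewrite leq_mul2r jm orbT. lia. Qed.

Lemma mem_edge k s m j (v : 'I_(scycle_n k s m)) : j < m -> 0 < k - s -> k < scycle_n k s m ->
 (v \in scycle_edge k s m j) =
 ((v + (scycle_n k s m - (j*(k-s)+1))) %% scycle_n k s m < k).
Proof.
move=> jm d0 kn.
have hjd := jd_le _ _ _ jm d0. rewrite -/(scycle_n k s m) in hjd.
move: hjd kn (ltn_ord v) ; rewrite /scycle_edge inE.
set n := scycle_n k s m; set jd := j * (k - s) => hjd kn vn.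
apply/existsP/idP.
- case=> t /eqP ->; rewrite modnDml.
  have -> : jd + 1 + t + (n - (jd + 1)) = t + n by lia.
  have tk := ltn_ord t.
  rewrite modnDr modn_small //; apply: ltn_trans tk kn.
- move=> H; exists (Ordinal H); apply/eqP => /=; rewrite modnDmr.
  have -> : jd + 1 + (v + (n - (jd + 1))) = v + n by lia.
  by rewrite modnDr modn_small.
Qed.

Lemma card_cnt k (P : pred nat) : #|[set t : 'I_k | P t]| = count P (iota 0 k).
Proof.
rewrite cardsE cardE /enum_mem size_filter -val_enum_ord count_map -enumT.
by apply: eq_count => x.
Qed.

Lemma edge_inter k s m j a : j < m -> 0 < k - s -> k < scycle_n k s m -> a < k - s ->
  #|scycle_edge k s m j :&: [set v : 'I_(scycle_n k s m) | v %% (k - s) == (a + 1) %% (k - s)]|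
  = count (fun t => t %% (k - s) == a) (iota 0 k).
Proof.
move=> jm d0 kn ad.
have n0 : 0 < scycle_n k s m by apply: leq_ltn_trans kn.
pose F (t : 'I_k) : 'I_(scycle_n k s m) := Ordinal (ltn_pmod (j * (k - s) + 1 + t) n0).
have key : forall t, ((j * (k - s) + 1 + t) %% scycle_n k s m %% (k - s) == (a + 1) %% (k - s))
           = (t %% (k - s) == a).
  move=> t; rewrite modn_dvdm; last by rewrite /scycle_n dvdn_mull.
  rewrite -addnA modnMDl [a + 1]addnC eqn_modDl (modn_small ad) //.
have Finj : injective F.
  move=> t1 t2 /(congr1 val) /= /eqP; rewrite -addnA -[_ + 1 + t2]addnA eqn_modDl eqn_modDl.
  rewrite !modn_small; first by move=> /eqP h; apply: val_inj.
  - by apply: ltn_trans kn.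
  - by apply: ltn_trans kn.
have -> : scycle_edge k s m j :&: [set v : 'I_(scycle_n k s m) | v %% (k - s) == (a + 1) %% (k - s)]
   = F @: [set t : 'I_k | t %% (k - s) == a].
  apply/setP => v; rewrite !inE; apply/andP/imsetP.
  - case=> /existsP [t /eqP hv] hV; exists t; last by apply: val_inj.
    by rewrite inE -key -hv.
  - case=> t; rewrite inE => ht ->; split; first by apply/existsP; exists t.
    by rewrite /= key.
by rewrite card_imset // (card_cnt k (fun t => t %% (k - s) == a)).
Qed.

Lemma cnt_shift d a x y : count (fun t => t %% d == a) (iota (x * d) y) = count (fun t => t %% d == a) (iota 0 y).
Proof.
rewrite -[x * d]addn0 iotaDl count_map; apply: eq_count => t /=.
by rewrite modnMDl.
Qed.
Lemma cnt_small d a y : a < d -> y <= d -> count (fun t => t %% d == a) (iota 0 y) = (a < y).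
Proof.
move=> ad yd.
rewrite (@eq_in_count _ _ (pred1 a)); last first.
  move=> t; rewrite mem_iota => /andP [_ ty] /=; rewrite modn_small //; lia.
by rewrite count_uniq_mem ?iota_uniq // mem_iota.
Qed.
Lemma cnt_full d a q : a < d -> count (fun t => t %% d == a) (iota 0 (q * d)) = q.
Proof.
move=> ad; elim: q => [|q IH]; first by rewrite mul0n.
rewrite mulSn addnC iotaD count_cat IH add0n cnt_shift cnt_small //; lia.
Qed.
Lemma cnt_all d a q r : a < d -> r < d ->
  count (fun t => t %% d == a) (iota 0 (q * d + r)) = q + (a < r).
Proof.
move=> ad rd; rewrite iotaD count_cat cnt_full // add0n cnt_shift cnt_small //; lia.
Qed.

Lemma part2 k s m : 1 <= s <= k - 1 -> k < scycle_n k s m -> ~~ ((k - s) %| k) ->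
  odd_bipartite (scycle k s m).
Proof.
move=> /andP [s1 sk] kn ndv.
have d0 : 0 < k - s by lia.
have d2 : 1 < k - s.
  rewrite ltn_neqAle d0 andbT; apply/negP => /eqP h; move: ndv; by rewrite -h dvd1n.
have dn : k - s < scycle_n k s m by lia.
set d := k - s in d0 d2 dn ndv *.
set q := k %/ d; set r := k %% d.
have r0 : 0 < r by rewrite lt0n; exact: ndv.
have rd : r < d by rewrite ltn_pmod.
pose a := if odd q then d.-1 else 0.
have ad : a < d by rewrite /a; case: (odd q); lia.
right; exists [set v : 'I_(scycle_n k s m) | v %% d == (a + 1) %% d]; split.
- apply/set0Pn.
  have h : (a + 1) %% d < scycle_n k s m by apply: ltn_trans dn; rewrite ltn_pmod.
  by exists (Ordinal h); rewrite inE /= modn_mod.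
- apply/set0Pn.
  have h : (a + 2) %% d < scycle_n k s m by apply: ltn_trans dn; rewrite ltn_pmod.
  exists (Ordinal h); rewrite !inE /= modn_mod.
  have -> : a + 2 = 1 + (a + 1) by lia.
  rewrite -{2}[a + 1]add0n eqn_modDr mod0n modn_small //.
- move=> e /imsetP [j _ ->].
  rewrite edge_inter //.
  have := cnt_all d a q r ad rd; rewrite -divn_eq => ->.
  rewrite /a; case: ifP => oq.
  + have -> : (d.-1 < r) = false by apply/negbTE; rewrite -leqNgt; lia.
    by rewrite addn0.
  + have -> : (0 < r) = true by apply: r0.
    by rewrite addn1 /= oq.
Qed.

Lemma edge_inj k s m : 0 < k - s -> k < scycle_n k s m ->
  injective (fun j : 'I_m => scycle_edge k s m j).
Proof.
move=> d0 kn j j' /= E.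
have hj := jd_le _ _ _ (ltn_ord j) d0. have hj' := jd_le _ _ _ (ltn_ord j') d0.
rewrite -/(scycle_n k s m) in hj hj'.
have n0 : 0 < scycle_n k s m by apply: leq_ltn_trans kn.
have Sn : (j * (k - s) + 1) %% scycle_n k s m < scycle_n k s m by rewrite ltn_pmod.
have Pn : j * (k - s) < scycle_n k s m by lia.
have memS := mem_edge k s m j' (Ordinal Sn) (ltn_ord j') d0 kn.
have memP := mem_edge k s m j' (Ordinal Pn) (ltn_ord j') d0 kn.
rewrite -E in memS memP.
rewrite mem_edge /= in memS; [|exact: ltn_ord|done|done].
rewrite mem_edge /= in memP; [|exact: ltn_ord|done|done].
move: memS memP hj hj' kn Pn n0.
set n := scycle_n k s m; set jd := j * (k - s); set jd' := j' * (k - s).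
move=> memS memP hj hj' kn Pn n0.
set c := n - (jd' + 1).
have Sin : ((jd + 1) %% n + c) %% n < k.
  rewrite -memS modnDml subnKC //.
  by rewrite modnn; apply: leq_trans d0 (leq_subr _ _).
have Pout : k <= (jd + c) %% n.
  rewrite leqNgt -memP (_ : jd + (n - (jd + 1)) = n.-1); last by clear -hj; lia.
  rewrite modn_small; last by rewrite prednK.
  by rewrite -leqNgt -ltnS prednK.
rewrite modnDml (_ : jd + 1 + c = (jd + c).+1) in Sin; last by clear; lia.
rewrite modnS in Sin; case: ifP Sin => hdv Sin; last first.
  by move: Sin Pout; generalize ((jd + c) %% n) => x; clear; lia.
have ejd : jd = jd'.
  clear memS memP Sin Pout E Sn.
  case: (leqP jd' jd) => hle.
  - rewrite (_ : (jd + c).+1 = (jd - jd') + n) in hdv; last by rewrite /c; lia.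
    rewrite dvdn_addl // in hdv.
    have [z|pos] := posnP (jd - jd'); first by lia.
    by have := dvdn_leq pos hdv; lia.
  - have pos : 0 < (jd + c).+1 by [].
    by have := dvdn_leq pos hdv; rewrite /c; lia.
apply: val_inj => /=; apply/eqP; rewrite -(eqn_pmul2r d0); exact/eqP.
Qed.
Lemma L1 x c d m : 0 < m -> c < d -> (x * d + c) %% (m * d) = (x %% m) * d + c.
Proof.
move=> m0 cd.
rewrite {1}(divn_eq x m) mulnDl -mulnA -addnA modnMDl modn_small //.
have : (x %% m).+1 * d <= m * d by rewrite leq_mul2r ltn_pmod // orbT.
rewrite mulSn; lia.
Qed.
Lemma L2 y c d q : c < d -> (y * d + c < q * d) = (y < q).
Proof.
move=> cd; apply/idP/idP.
- move=> h; rewrite ltnNge; apply/negP => hq.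
  have : q * d <= y * d by rewrite leq_mul2r hq orbT.
  move: h; generalize (q * d) (y * d) => a b; lia.
- move=> h; have : y.+1 * d <= q * d by rewrite leq_mul2r h orbT.
  rewrite mulSn; lia.
Qed.
Lemma invol b m (j : nat) : b < m -> j < m -> (b + (m - (b + (m - j)) %% m)) %% m = j.
Proof.
move=> bm jm; case: (leqP j b) => h.
- rewrite (_ : b + (m - j) = (b - j) + m); last by lia.
  rewrite modnDr (modn_small (_ : b - j < m)); last by lia.
  rewrite (_ : b + (m - (b - j)) = j + m); last by lia.
  by rewrite modnDr modn_small.
- rewrite (modn_small (_ : b + (m - j) < m)); last by lia.
  rewrite (_ : b + (m - (b + (m - j))) = j); last by lia.
  by rewrite modn_small.
Qed.

Lemma block_mem k s m j (v : 'I_(scycle_n k s m)) : 0 < k - s -> k < scycle_n k s m ->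
  (k - s) %| k -> j < m ->
  (v \in scycle_edge k s m j) =
  (((v + (scycle_n k s m - 1)) %% scycle_n k s m %/ (k - s) + (m - j)) %% m < k %/ (k - s)).
Proof.
move=> d0 kn dk jm.
have hj := jd_le _ _ _ jm d0. rewrite -/(scycle_n k s m) in hj.
have m0 : 0 < m by move: jm; clear; lia.
rewrite mem_edge //.
have hk : k = k %/ (k - s) * (k - s) by rewrite divnK.
move: hj (ltn_ord v) (ltn_pmod ((v + (scycle_n k s m - 1)) %% scycle_n k s m) d0).
set n := scycle_n k s m; set d := k - s; set jd := j * d.
set w := (v + (n - 1)) %% n; set q := k %/ d.
move=> hj vn cd.
have e1 : (v + (n - (jd + 1))) %% n = (w + (n - jd)) %% n.
  rewrite /w modnDml (_ : v + (n - 1) + (n - jd) = v + (n - (jd + 1)) + n) ?modnDr //.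
  by clear -hj; lia.
rewrite e1 {1}(divn_eq w d) /n /scycle_n -/d /jd -mulnBl.
rewrite (_ : w %/ d * d + w %% d + (m - j) * d = (w %/ d + (m - j)) * d + w %% d); last first.
  by rewrite mulnDl; clear; lia.
by rewrite L1 // [X in (_ < X) = _]hk L2.
Qed.

Lemma deg_const k s m (v : 'I_(scycle_n k s m)) : 0 < k - s -> k < scycle_n k s m ->
  (k - s) %| k -> hdeg (scycle k s m) v = #|[set i : 'I_m | i < k %/ (k - s)]|.
Proof.
move=> d0 kn dk.
have m0 : 0 < m.
  have : 0 < scycle_n k s m by apply: leq_ltn_trans kn.
  by rewrite /scycle_n muln_gt0 => /andP [].
rewrite /hdeg.
have -> : [set e in scycle k s m | v \in e]
        = (fun j : 'I_m => scycle_edge k s m j) @: [set j : 'I_m | v \in scycle_edge k s m j].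
  apply/setP => e; apply/idP/idP.
  - rewrite inE => /andP [/imsetP [j _ ->] hv]; apply: imset_f; by rewrite inE.
  - case/imsetP => j; rewrite inE => hv ->; rewrite inE hv andbT; apply: imset_f; by [].
rewrite card_imset; last exact: edge_inj.
set b := (v + (scycle_n k s m - 1)) %% scycle_n k s m %/ (k - s).
have bm : b < m.
  rewrite /b ltn_divLR // -/(scycle_n k s m) ltn_pmod //.
  by apply: leq_ltn_trans kn.
pose g (j : 'I_m) : 'I_m := Ordinal (ltn_pmod (b + (m - j)) m0).
have -> : [set j : 'I_m | v \in scycle_edge k s m j] = g @^-1: [set i : 'I_m | i < k %/ (k - s)].
  apply/setP => j; rewrite in_set block_mem ?ltn_ord // !inE.
  by [].
rewrite card_preimset //.
apply: (can_inj (g := g)) => j; apply: val_inj => /=.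
by rewrite invol.
Qed.

Theorem proposition4p2 (k s m : nat) :
  4 <= k -> ~~ odd k -> 1 <= s <= k - 1 ->
  2 * k - s <= scycle_n k s m ->
  ~ hregular (scycle k s m) ->
  odd_bipartite (scycle k s m).
Proof.
move=> k4 _ hs hn nreg.
have kn : k < scycle_n k s m by lia.
have d0 : 0 < k - s by lia.
case: (boolP ((k - s) %| k)) => dk; last exact: part2.
exfalso; apply: nreg => u v.
by rewrite !deg_const.
Qed.
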